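(* Let $S\subseteq[2n]$ with $1\le|S|\le 2n-1$. Let $\mathcal P_S=\{B_{i,j}:i\ne j,\ \{i,j\}\subseteq S\text{ or }\{i,j\}\subseteq[2n]\setminus S\}$ and let $\mathcal O_S=\{\gamma_j:j\in[2n]\setminus S\}$ if $|S|$ is even and $\mathcal O_S=\{\gamma_j:j\in S\}$ if $|S|$ is odd. Then every element of $\mathcal P_S\cup\mathcal O_S$ commutes with $\gamma_S$, and the commutant of $\mathcal P_S\cup\mathcal O_S$ (hence also the commutant of the group of all unitaries generated by braid operators $B_{i,j}$ and single Majoranas $\gamma_j$ that fix $\gamma_S$ under conjugation) equals $\operatorname{Span}(I,\gamma_S)$. Thus the assemblage of degree-$|S|$ Majorana observables is rigidly symmetric under braid and single-Majorana transformations.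
   Context: Let $\gamma_1,\dots,\gamma_{2n}$ be Majorana operators on $(\mathbb C^2)^{\otimes n}$ (Hermitian, $\gamma_j\gamma_{j'}+\gamma_{j'}\gamma_j=2\delta_{jj'}I$); $\gamma_S=i^{\binom m2}\gamma_{j_1}\cdots\gamma_{j_m}$ for $S=\{j_1<\dots<j_m\}$. For $i\ne j$, $B_{i,j}=\frac1{\sqrt2}(I-\gamma_i\gamma_j)$. The commutant of a set of operators is the set of all operators on $(\mathbb C^2)^{\otimes n}$ commuting with each of them. *)

(* Defs.v *)
(* Matrices over an arbitrary numeric algebraically closed
   field C (e.g. complex numbers), acting on (C^2)^{\otimes n} = C^(2^n). *)
From HB Require Import structures.
From mathcomp Require Import all_boot all_order all_algebra.
Set Implicit Arguments. Unset Strict Implicit. Unset Printing Implicit Defensive.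
Import Order.TTheory GRing.Theory Num.Theory.
Local Open Scope ring_scope.

Section Majorana.
Variables (C : numClosedFieldType) (n : nat).
Notation Mat := 'M[C]_(2 ^ n).

Definition adj (A : Mat) : Mat := (map_mx Num.conj A)^T.

Definition is_majorana (gamma : 'I_(2 * n) -> Mat) : Prop :=
  (forall j, adj (gamma j) = gamma j) /\
  (forall j j', gamma j *m gamma j' + gamma j' *m gamma j
                = (if j == j' then 2 else 0)%:M).

Definition gprod (gamma : 'I_(2 * n) -> Mat) (s : seq 'I_(2 * n)) : Mat :=
  foldr (fun j acc => gamma j *m acc) 1%:M s.

(* gamma_S = i^{binom m 2} gamma_{j_1} ... gamma_{j_m}, j_1 < ... < j_m;
   enum S lists the elements of S in increasing order. *)
Definition gammaS (gamma : 'I_(2 * n) -> Mat) (S : {set 'I_(2 * n)}) : Mat :=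
  ('i ^+ 'C(#|S|, 2)) *: gprod gamma (enum S).

Definition braid (gamma : 'I_(2 * n) -> Mat) (i j : 'I_(2 * n)) : Mat :=
  (sqrtC (2 : C))^-1 *: (1%:M - gamma i *m gamma j).

Definition commutes (A B : Mat) : Prop := A *m B = B *m A.

Definition PS (gamma : 'I_(2 * n) -> Mat) (S : {set 'I_(2 * n)}) (M : Mat) : Prop :=
  exists i j, i != j /\
    ((i \in S /\ j \in S) \/ (i \notin S /\ j \notin S)) /\ M = braid gamma i j.

Definition OS (gamma : 'I_(2 * n) -> Mat) (S : {set 'I_(2 * n)}) (M : Mat) : Prop :=
  exists j, (if odd #|S| then j \in S else j \notin S) /\ M = gamma j.

Definition commutant (X : Mat -> Prop) (A : Mat) : Prop :=
  forall M, X M -> commutes A M.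

Definition span_I_gS (gamma : 'I_(2 * n) -> Mat) (S : {set 'I_(2 * n)}) (A : Mat) : Prop :=
  exists a b : C, A = a%:M + b *: gammaS gamma S.

Definition braid_majorana_gen (gamma : 'I_(2 * n) -> Mat) (M : Mat) : Prop :=
  (exists i j, i != j /\ M = braid gamma i j) \/ (exists j, M = gamma j).

Inductive gen_group (G : Mat -> Prop) : Mat -> Prop :=
| gg_gen M : G M -> gen_group G M
| gg_one : gen_group G 1%:M
| gg_mul M N : gen_group G M -> gen_group G N -> gen_group G (M *m N)
| gg_inv M : gen_group G M -> gen_group G (invmx M).

Definition stab_gS (gamma : 'I_(2 * n) -> Mat) (S : {set 'I_(2 * n)}) (U : Mat) : Prop :=
  gen_group (braid_majorana_gen gamma) U /\ U *m gammaS gamma S *m invmx U = gammaS gamma S.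

End Majorana.

(* Main.v *)
Require Import Defs.
From mathcomp Require Import all_boot all_order all_algebra.
From mathcomp Require Import zify.
Import GRing.Theory Num.Theory.
Local Open Scope ring_scope.
Set Implicit Arguments. Unset Strict Implicit.

Section Work.
Variables (C : numClosedFieldType) (n : nat) (gamma : 'I_(2 * n) -> 'M[C]_(2 ^ n)).
Hypothesis Hg : is_majorana gamma.

Lemma two_neq0 : (2 : C) != 0.
Proof. by rewrite pnatr_eq0. Qed.

Lemma gsq j : gamma j *m gamma j = 1%:M.
Proof.
have := Hg.2 j j; rewrite eqxx => H.
have H2 : (2 : C) *: (gamma j *m gamma j) = (2 : C) *: 1%:M.
  by rewrite scaler_nat mulr2n H scalemx1.
have := congr1 (fun X => (2 : C)^-1 *: X) H2; rewrite /= !scalerA mulVf ?two_neq0 //.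
by rewrite !scale1r.
Qed.

Lemma ganti j j' : j != j' -> gamma j *m gamma j' = - (gamma j' *m gamma j).
Proof.
move=> /negbTE nj; have := Hg.2 j j'; rewrite nj raddf0 => H.
by apply/eqP; rewrite -addr_eq0 H.
Qed.

Lemma gcomm k s : gamma k *m gprod gamma s =
  (-1) ^+ (count (predC1 k) s) *: (gprod gamma s *m gamma k).
Proof.
elim: s => [|j s IH] /=; first by rewrite expr0 scale1r mulmx1 mul1mx.
rewrite mulmxA; have [->|njk] := eqVneq j k.
  by rewrite /= add0n -[LHS]mulmxA [in LHS]IH -scalemxAr mulmxA.
rewrite (@ganti k j); last by rewrite eq_sym.
rewrite mulNmx -[in LHS]mulmxA [in LHS]IH -scalemxAr mulmxA /=.
by rewrite add1n exprS mulN1r scaleNr.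
Qed.


Notation g T := (gprod gamma (enum T)).
Notation h T := (gprod gamma (rev (enum T))).
Notation cnt k T := (count (predC1 k) (enum T)).

Lemma gprod_cat s t : gprod gamma (s ++ t) = gprod gamma s *m gprod gamma t.
Proof. by elim: s => [|j s IH] /=; rewrite ?mul1mx // IH mulmxA. Qed.

Lemma gprod_rcons s j : gprod gamma (rcons s j) = gprod gamma s *m gamma j.
Proof. by rewrite -cats1 gprod_cat /= mulmx1. Qed.

Lemma gprod_rev s : gprod gamma (rev s) *m gprod gamma s = 1%:M.
Proof.
elim: s => [|j s IH] /=; first by rewrite mulmx1.
rewrite rev_cons gprod_rcons mulmxA -[_ *m gamma j *m gamma j]mulmxA gsq mulmx1.
exact: IH.
Qed.

Lemma cntE k (T : {set 'I_(2 * n)}) : (cnt k T + (k \in T) = #|T|)%N.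
Proof.
rewrite cardE -(count_predC (pred1 k)) addnC; congr (_ + _)%N.
by rewrite (count_uniq_mem _ (enum_uniq _)) mem_enum.
Qed.

Lemma gconj k s : gamma k *m gprod gamma s *m gamma k =
  (-1) ^+ (count (predC1 k) s) *: gprod gamma s.
Proof. by rewrite gcomm -scalemxAl -mulmxA gsq mulmx1. Qed.

Lemma tr_vanish s k : odd (count (predC1 k) s) -> \tr (gprod gamma s) = 0.
Proof.
move=> Ho; have E : \tr (gprod gamma s) = - \tr (gprod gamma s).
  rewrite -{1}[gprod gamma s]mul1mx -(gsq k) -mulmxA mxtrace_mulC gconj.
  by rewrite mxtraceZ -signr_odd Ho expr1 mulN1r.
have : (2 : C) * \tr (gprod gamma s) = 0 by rewrite mulrC mulr_natr mulr2n {2}E subrr.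
by move/eqP; rewrite mulf_eq0 (negbTE two_neq0) => /eqP.
Qed.


Lemma exists_odd (U T : {set 'I_(2 * n)}) : U != T ->
  exists k, odd (cnt k U + cnt k T).
Proof.
move=> nUT.
have E k : (cnt k U + cnt k T + ((k \in U) + (k \in T)) = #|U| + #|T|)%N.
  by rewrite -(cntE k U) -(cntE k T) addnACA.
have [Ho|He] := boolP (odd (#|U| + #|T|)).
  have [/existsP [k /eqP Hk]|Hn] := boolP [exists k, (k \in U) == (k \in T)].
    exists k; have := congr1 odd (E k); rewrite Hk !oddD addbb addbF => ->.
    by rewrite -oddD.
  exfalso; move: Ho; suff -> : T = ~: U.
    by rewrite cardsC card_ord oddM.
  apply/setP => k; rewrite inE; move/existsPn: Hn => /(_ k).
  by case: (k \in U); case: (k \in T).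
have [/existsP [k Hk]|Hn] := boolP [exists k, (k \in U) != (k \in T)].
  exists k; have := congr1 odd (E k); rewrite !oddD.
  move: Hk He; rewrite oddD; case: (k \in U); case: (k \in T) => //=;
  case: (odd _); case: (odd _); case: (odd _); case: (odd _); by [].
exfalso; move/negP: nUT; apply; apply/eqP/setP => k.
by move/existsPn: Hn => /(_ k); rewrite negbK => /eqP.
Qed.


Lemma tr_hg (U T : {set 'I_(2 * n)}) : \tr (h U *m g T) = if U == T then (2 ^ n)%:R else 0.
Proof.
case: eqP => [->|/eqP nUT]; first by rewrite gprod_rev mxtrace1.
have [k Hk] := exists_odd nUT; rewrite -gprod_cat; apply: (tr_vanish (k:=k)).
by rewrite count_cat count_rev.
Qed.

Lemma N_neq0 : ((2 ^ n)%:R : C) != 0.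
Proof. by rewrite pnatr_eq0 expn_eq0. Qed.

Definition K := #|{set 'I_(2 * n)}|.
Definition Tof (i : 'I_K) : {set 'I_(2 * n)} := enum_val i.
Lemma Tof_inj : injective Tof.
Proof. exact: enum_val_inj. Qed.

Definition X : K.-tuple 'M[C]_(2 ^ n) := [tuple g (Tof i) | i < K].

Lemma XE (i : 'I_K) : X`_i = g (Tof i).
Proof. by rewrite nth_mktuple. Qed.

Lemma tr_sum (k : 'I_K -> C) j :
  \tr (h (Tof j) *m \sum_(i < K) k i *: X`_i) = k j * (2 ^ n)%:R.
Proof.
rewrite mulmx_sumr raddf_sum (bigD1 j) //= big1 ?addr0.
  by rewrite XE -scalemxAr mxtraceZ tr_hg eqxx.
move=> i nij; rewrite XE -scalemxAr mxtraceZ tr_hg.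
by rewrite (inj_eq Tof_inj) eq_sym (negbTE nij) mulr0.
Qed.

Lemma Xfree : free X.
Proof.
apply/freeP => k Hk j; have := congr1 (fun Y => \tr (h (Tof j) *m Y)) Hk.
rewrite /= tr_sum mulmx0 mxtrace0 => /eqP; rewrite mulf_eq0 (negbTE N_neq0) orbF.
by move/eqP.
Qed.

Lemma Xspan : (<<X>> = fullv)%VS.
Proof.
apply/eqP; rewrite eqEdim subvf /= dimvf dim_matrix (eqP Xfree) size_tuple.
rewrite /K -cardsT -powersetT card_powerset cardsT card_ord.
by rewrite mul2n -addnn expnD; exact: leqnn.
Qed.

Lemma expand (A : 'M[C]_(2 ^ n)) :
  A = \sum_(i < K) ((2 ^ n)%:R^-1 * \tr (h (Tof i) *m A)) *: X`_i.
Proof.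
have HA : A \in <<X>>%VS by rewrite Xspan memvf.
have E := coord_span HA.
rewrite {1}E; apply: eq_bigr => i _; congr (_ *: _).
by rewrite {2}E tr_sum mulrC mulfK ?N_neq0.
Qed.


Lemma tr_zero (A P Q : 'M[C]_(2 ^ n)) (H : 'M[C]_(2 ^ n)) :
  P *m Q = 1%:M -> A *m P = P *m A -> Q *m H *m P = - H -> \tr (H *m A) = 0.
Proof.
move=> HPQ HAP HQ.
have E : \tr (H *m A) = - \tr (H *m A).
  transitivity (\tr ((H *m P *m A) *m Q)).
    by rewrite -[H *m P *m A]mulmxA -HAP mulmxA -[H *m A *m P *m Q]mulmxA HPQ mulmx1.
  by rewrite mxtrace_mulC !mulmxA HQ mulNmx raddfN.
have : (2 : C) * \tr (H *m A) = 0 by rewrite mulrC mulr_natr mulr2n {2}E subrr.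
by move/eqP; rewrite mulf_eq0 (negbTE two_neq0) => /eqP.
Qed.

Lemma hconj1 k (T : {set 'I_(2 * n)}) : gamma k *m h T *m gamma k = (-1) ^+ (cnt k T) *: h T.
Proof. by rewrite gconj count_rev. Qed.

Lemma hconj2 i j (T : {set 'I_(2 * n)}) : (gamma j *m gamma i) *m h T *m (gamma i *m gamma j) =
  (-1) ^+ (cnt i T + cnt j T) *: h T.
Proof.
rewrite !mulmxA -[gamma j *m gamma i *m _]mulmxA -[gamma j *m (_ *m _) *m _]mulmxA.
by rewrite hconj1 -scalemxAr -scalemxAl hconj1 scalerA exprD mulrC.
Qed.


Lemma oddcnt k (T : {set 'I_(2 * n)}) : odd (cnt k T) = odd #|T| (+) (k \in T).
Proof.
have := congr1 odd (cntE k T); rewrite oddD oddb => <-.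
by rewrite -addbA addbb addbF.
Qed.

Lemma comb (S T : {set 'I_(2 * n)}) : (0 < #|S| < 2 * n)%N -> T != set0 -> T != S ->
  (exists i j, i != j /\ ((i \in S /\ j \in S) \/ (i \notin S /\ j \notin S)) /\
     odd (cnt i T + cnt j T))
  \/ (exists k, (if odd #|S| then k \in S else k \notin S) /\ odd (cnt k T)).
Proof.
move=> /andP [S0 S2] nT0 nTS.
have [s0 s0S] : exists s0, s0 \in S by apply/set0Pn; rewrite -card_gt0.
have [c0 c0S] : exists c0, c0 \notin S.
  apply/existsP; rewrite -negb_forall; apply/negP => /forallP HS.
  have ES : S = setT by apply/setP => x; rewrite inE HS.
  by move: S2; rewrite ES cardsT card_ord ltnn.
have oddpair i j : odd (cnt i T + cnt j T) = (i \in T) (+) (j \in T).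
  rewrite oddD !oddcnt; by case: (odd _); case: (_ \in T); case: (_ \in T).
set a := s0 \in T; set b := c0 \in T.
have [/existsP [i /andP [iS Hi]]|HS] := boolP [exists i, (i \in S) && ((i \in T) != a)].
  left; exists i, s0; split; last split.
  - by apply/eqP => E; move: Hi; rewrite E /a eqxx.
  - by left; split.
  - by rewrite oddpair -/a; move: Hi; case: (i \in T); case: a.
have [/existsP [i /andP [iS Hi]]|HSc] := boolP [exists i, (i \notin S) && ((i \in T) != b)].
  left; exists i, c0; split; last split.
  - by apply/eqP => E; move: Hi; rewrite E /b eqxx.
  - by right; split.
  - by rewrite oddpair -/b; move: Hi; case: (i \in T); case: b.
have HT x : (x \in T) = if x \in S then a else b.
  case: ifP => xS.
    by move/existsPn: HS => /(_ x); rewrite xS /= negbK => /eqP.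
  by move/existsPn: HSc => /(_ x); rewrite xS /= negbK => /eqP.
right; move: HT; case Ha : a; case Hb : b => HT.
- have ET : T = setT by apply/setP => x; rewrite HT inE; case: (x \in S).
  have cT : #|T| = (2 * n)%N by rewrite ET cardsT card_ord.
  case Ho : (odd #|S|).
    by exists s0; split => //; rewrite oddcnt cT oddM /= HT s0S.
  by exists c0; split => //; rewrite oddcnt cT oddM /= HT (negbTE c0S).
- exfalso; move/negP: nTS; apply; apply/eqP/setP => x; rewrite HT; by case: (x \in S).
- have ET : T = ~: S by apply/setP => x; rewrite HT inE; case: (x \in S).
  have cT : #|T| = (2 * n - #|S|)%N by rewrite ET cardsCs setCK card_ord.
  have oT : odd #|T| = odd #|S|.
    by rewrite cT oddB ?oddM //; apply: ltnW.
  case Ho : (odd #|S|).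
    by exists s0; split => //; rewrite oddcnt oT Ho HT s0S.
  by exists c0; split => //; rewrite oddcnt oT Ho HT (negbTE c0S).
- exfalso; move/negP: nT0; apply; apply/eqP/setP => x; rewrite HT inE; by case: (x \in S).
Qed.


Lemma c_neq0 : (sqrtC (2 : C))^-1 != 0.
Proof. by rewrite invr_eq0 sqrtC_eq0 two_neq0. Qed.

Lemma braid_comm i j (A : 'M[C]_(2 ^ n)) : A *m braid gamma i j = braid gamma i j *m A ->
  A *m (gamma i *m gamma j) = (gamma i *m gamma j) *m A.
Proof.
rewrite /braid -scalemxAr -scalemxAl => /(scalerI c_neq0).
rewrite mulmxBr mulmxBl mulmx1 mul1mx => /addrI /oppr_inj.
by rewrite -mulmxA.
Qed.

Lemma braid_inv i j : i != j ->
  braid gamma i j *m ((sqrtC (2 : C))^-1 *: (1%:M + gamma i *m gamma j)) = 1%:M.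
Proof.
move=> nij; rewrite /braid -scalemxAr -scalemxAl scalerA mulmxBl mul1mx mulmxDr mulmx1.
have PP : gamma i *m gamma j *m (gamma i *m gamma j) = - 1%:M.
  have nji : j != i by rewrite eq_sym.
  rewrite mulmxA -[gamma i *m gamma j *m gamma i]mulmxA (ganti nji) mulmxN mulNmx.
  by rewrite mulmxA gsq mul1mx gsq.
rewrite PP opprB addrA [1%:M + _ + 1%:M]addrAC addrK -mulr2n -scaler_nat scalerA.
by rewrite -invfM -expr2 sqrtCK mulVf ?two_neq0 // scale1r.
Qed.

Lemma pairG i j (T : {set 'I_(2 * n)}) :
  gamma i *m gamma j *m g T = (-1) ^+ (cnt i T + cnt j T) *: (g T *m (gamma i *m gamma j)).
Proof.
rewrite -[LHS]mulmxA [gamma j *m _]gcomm -scalemxAr [in LHS]mulmxA gcomm.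
rewrite -scalemxAl scalerA -exprD addnC; congr (_ *: _).
by rewrite mulmxA.
Qed.


Lemma oddpair2 i j (T : {set 'I_(2 * n)}) :
  odd (cnt i T + cnt j T) = (i \in T) (+) (j \in T).
Proof. rewrite oddD !oddcnt; by case: (odd _); case: (_ \in T); case: (_ \in T). Qed.

Lemma part1 (S : {set 'I_(2 * n)}) M : PS gamma S M \/ OS gamma S M -> commutes M (gammaS gamma S).
Proof.
have key : M *m g S = g S *m M -> commutes M (gammaS gamma S).
  by rewrite /commutes /gammaS -scalemxAr -scalemxAl => ->.
move=> HM; apply: key; move: HM.
case => [[i [j [nij [Hij ->]]]] | [k [Hk ->]]].
- rewrite /braid -scalemxAl -scalemxAr; congr (_ *: _).
  rewrite mulmxBl mulmxBr mul1mx mulmx1 pairG -signr_odd oddpair2.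
  have -> : (i \in S) (+) (j \in S) = false.
    by case: Hij => [[-> ->] | [/negbTE -> /negbTE ->]].
  by rewrite expr0 scale1r.
- rewrite gcomm -signr_odd oddcnt.
  have -> : odd #|S| (+) (k \in S) = false.
    by move: Hk; case: (odd #|S|) => [->|/negbTE ->].
  by rewrite expr0 scale1r.
Qed.

Lemma part2b (S : {set 'I_(2 * n)}) A : span_I_gS gamma S A ->
  commutant (fun M => PS gamma S M \/ OS gamma S M) A.
Proof.
move=> [a [b ->]] M HM; rewrite /commutes mulmxDl mulmxDr scalar_mxC.
by rewrite -scalemxAl -scalemxAr (part1 HM).
Qed.

Lemma part2a (S : {set 'I_(2 * n)}) A : (0 < #|S| < 2 * n)%N ->
  commutant (fun M => PS gamma S M \/ OS gamma S M) A -> span_I_gS gamma S A.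
Proof.
move=> HS HA.
have Z (i : 'I_K) : Tof i != set0 -> Tof i != S -> \tr (h (Tof i) *m A) = 0.
  move=> H0 H1; case: (@comb S (Tof i) HS H0 H1) => [[k [l [nkl [Hkl Ho]]]] | [k [Hk Ho]]].
    apply: (@tr_zero A (gamma k *m gamma l) (gamma l *m gamma k)).
    - by rewrite mulmxA -[gamma k *m gamma l *m gamma l]mulmxA gsq mulmx1 gsq.
    - apply: braid_comm; apply: HA; left; exists k, l; split => //.
    - by rewrite hconj2 -signr_odd Ho expr1 scaleN1r.
  apply: (@tr_zero A (gamma k) (gamma k)).
  - exact: gsq.
  - by apply: HA; right; exists k.
  - by rewrite hconj1 -signr_odd Ho expr1 scaleN1r.
have S0 : S != set0 by rewrite -card_gt0; case/andP: HS.
pose i0 : 'I_K := enum_rank set0.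
pose i1 : 'I_K := enum_rank S.
have T0 : Tof i0 = set0 by rewrite /Tof enum_rankK.
have T1 : Tof i1 = S by rewrite /Tof enum_rankK.
have n01 : i1 != i0 by apply: contra S0 => /eqP E; rewrite -T1 E T0.
rewrite (expand A) (bigD1 i0) // (bigD1 i1) //= big1 ?addr0; last first.
  move=> i /andP [ni0 ni1]; rewrite Z ?mulr0 ?scale0r //.
    by apply: contra ni0 => /eqP E; rewrite -T0 in E; rewrite (Tof_inj E).
  by apply: contra ni1 => /eqP E; rewrite -T1 in E; rewrite (Tof_inj E).
rewrite !XE T0 T1 enum_set0 /= scalemx1.
exists ((2 ^ n)%:R^-1 * \tr (1%:M *m A)),
  ((2 ^ n)%:R^-1 * \tr (h S *m A) / 'i ^+ 'C(#|S|, 2)).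
rewrite /gammaS scalerA mulfVK //; apply: expf_neq0; exact: neq0Ci.
Qed.


Lemma gen_unit U : gen_group (braid_majorana_gen gamma) U -> U \in unitmx.
Proof.
elim => [M [[i [j [nij ->]]] | [j ->]] | | M N _ HM _ HN | M _ HM].
- by case: (mulmx1_unit (braid_inv nij)).
- by case: (mulmx1_unit (gsq j)).
- exact: unitmx1.
- by rewrite unitmx_mul HM HN.
- by rewrite unitmx_inv.
Qed.

Lemma spancomm (S : {set 'I_(2 * n)}) A M : span_I_gS gamma S A ->
  M *m gammaS gamma S = gammaS gamma S *m M -> commutes A M.
Proof.
move=> [a [b ->]] HM; rewrite /commutes mulmxDl mulmxDr scalar_mxC.
by rewrite -scalemxAl -scalemxAr HM.
Qed.

Lemma part3 (S : {set 'I_(2 * n)}) A : (0 < #|S| < 2 * n)%N ->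
  (commutant (stab_gS gamma S) A <-> span_I_gS gamma S A).
Proof.
move=> HS; split.
  move=> HA; apply: part2a => // M HM; apply: HA.
  have HG : gen_group (braid_majorana_gen gamma) M.
    apply: gg_gen; case: HM => [[i [j [nij [_ ->]]]]|[j [_ ->]]].
      by left; exists i, j.
    by right; exists j.
  split => //; rewrite (part1 HM) -mulmxA mulmxV ?mulmx1 //; exact: gen_unit.
move=> Hsp U [HU HUg]; apply: spancomm Hsp _.
by rewrite -{2}HUg -mulmxA mulVmx ?mulmx1 //; exact: gen_unit.
Qed.

End Work.

Unset Implicit Arguments. Set Strict Implicit.

Theorem mainTheorem14 (C : numClosedFieldType) (n : nat)
    (gamma : 'I_(2 * n) -> 'M[C]_(2 ^ n)) (S : {set 'I_(2 * n)}) :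
  is_majorana gamma ->
  (0 < #|S| < 2 * n)%N ->
  (forall M, PS gamma S M \/ OS gamma S M -> commutes M (gammaS gamma S)) /\
  (forall A, commutant (fun M => PS gamma S M \/ OS gamma S M) A <->
             span_I_gS gamma S A) /\
  (forall A, commutant (stab_gS gamma S) A <-> span_I_gS gamma S A).
Proof.
move=> Hg HS; split; first exact: part1.
split => A; last exact: part3.
split; [exact: part2a | exact: part2b].
Qed.
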